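(* Let $G$ be a connected graph. The interval function $I_G$ satisfies the axioms $(J0')$ and $(br)$ if and only if $G$ is a bridged graph.
   Context: Graphs are finite, simple and connected; $d$ is the shortest-path distance and $I_G(u,v)=\{w: d(u,w)+d(w,v)=d(u,v)\}$. A graph is bridged if it has no isometric cycle of length greater than $3$. For a map $R:V\times V\to 2^V$: $(J0')$: for pairwise distinct $u,x,y,v$, if $x\in R(u,y)$, $y\in R(x,v)$ and $R(u,y)\cap R(x,v)\subseteq\{u,x,y,v\}$ then $x\in R(u,v)$. $(br)$: for any $u,v,x,y,z$, if $R(x,y)=\{x,y\}$, $R(x,u)=\{x,u\}$, $R(v,y)=\{v,y\}$ and $z\in R(u,v)$, then $R(x,z)=\{x,z\}$ or $R(y,z)=\{y,z\}$. *)

(* Defs.v *)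
(* Finite simple connected graphs as a symmetric irreflexive
   relation on a finType. *)
From mathcomp Require Import all_boot.
Set Implicit Arguments. Unset Strict Implicit. Unset Printing Implicit Defensive.

Section Graph.
Variables (T : finType) (e : rel T).

Definition walkn (n : nat) (x y : T) : bool :=
  [exists p : n.-tuple T, path e x p && (last x p == y)].

(* shortest-path distance: least n (< #|T|) with a walk of length n;
   correct for connected graphs (where d(x,y) < #|T|). *)
Definition dist (x y : T) : nat := find (fun n => walkn n x y) (iota 0 #|T|).

Definition connected_graph : Prop := forall x y : T, connect e x y.

Definition interval (u v : T) : {set T} :=
  [set w | dist u w + dist w v == dist u v].

(* isometric cycle of length k: distinct vertices s_0..s_{k-1}, k >= 3,
   cyclically consecutive vertices adjacent, and graph distance equals
   distance along the cycle *)
Definition isometric_cycle (s : seq T) : Prop :=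
  [/\ 3 <= size s, uniq s, cycle e s &
     forall (x0 : T) (i j : nat), i < size s -> j < size s ->
       dist (nth x0 s i) (nth x0 s j) =
       minn ((j - i) + (i - j)) (size s - ((j - i) + (i - j)))].

Definition bridged : Prop :=
  forall s : seq T, isometric_cycle s -> size s <= 3.

End Graph.

Section Conds.
Variables (T : finType) (R : T -> T -> {set T}).

Definition cond_J0' : Prop :=
  forall u x y v : T,
    uniq [:: u; x; y; v] ->
    x \in R u y -> y \in R x v ->
    R u y :&: R x v \subset [set u; x; y; v] ->
    x \in R u v.

Definition cond_br : Prop :=
  forall u v x y z : T,
    R x y = [set x; y] -> R x u = [set x; u] -> R v y = [set v; y] ->
    z \in R u v ->
    R x z = [set x; z] \/ R y z = [set y; z].
End Conds.

(* Main.v *)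
Require Import Defs.
From mathcomp Require Import all_boot.
From mathcomp Require Import zify.
Set Implicit Arguments. Unset Strict Implicit. Unset Printing Implicit Defensive.

Ltac clear_noise := repeat match goal with
  | H : is_true ?b |- _ =>
      lazymatch b with
      | (_ <= _)%N => fail
      | (?x == _) => let t := type of x in lazymatch t with nat => fail | _ => clear H end
      | ~~ (?x == _) => let t := type of x in lazymatch t with nat => fail | _ => clear H end
      | odd _ => fail
      | ~~ odd _ => fail
      | _ => clear H
      end
  | H : ?x = _ |- _ => let t := type of x in lazymatch t with nat => fail | _ => clear H end
  end.
Ltac lia' := clear_noise; lia.

Section Dist.
Variables (T : finType) (e : rel T).
Hypotheses (esym : symmetric e) (eirr : irreflexive e) (conn : connected_graph e).
Local Notation d := (dist e).

Definition W n x y := exists p : seq T, [/\ size p = n, path e x p & last x p = y].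

Lemma walknP n x y : reflect (W n x y) (walkn e n x y).
Proof.
apply: (iffP existsP) => [[t /andP[hp /eqP hl]] | [p [hs hp hl]]].
  by exists (val t); rewrite size_tuple.
have hs' : size p == n by apply/eqP.
by exists (Tuple hs'); rewrite /= hp hl eqxx.
Qed.

Lemma W_short n x y : W n x y -> exists m, [/\ m < #|T|, m <= n & W m x y].
Proof.
case=> p [hs hp hl]; case: (shortenP hp) hl => p' hp' hu hsub hl.
exists (size p'); split => //; last by exists p'.
  have /card_uniqP hc := hu.
  have := max_card (mem (x :: p')); rewrite hc /=; lia'.
rewrite -hs; apply: uniq_leq_size; first by case/andP: hu.
move=> z hz; exact: hsub.
Qed.

Lemma dist_le n x y : W n x y -> d x y <= n.
Proof.
case/W_short=> m [hm hmn hw]; apply: leq_trans hmn.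
rewrite leqNgt; apply/negP => hlt.
have := before_find 0 hlt; rewrite nth_iota //.
by rewrite add0n; move/walknP: hw => ->.
Qed.

Lemma W_conn x y : exists n, W n x y.
Proof.
by case/connectP: (conn x y) => p hp hl; exists (size p); exists p.
Qed.

Lemma dist_W x y : W (d x y) x y.
Proof.
case: (W_conn x y) => n /W_short [m [hm _ hw]].
have hh : has (fun n => walkn e n x y) (iota 0 #|T|).
  by apply/hasP; exists m; [rewrite mem_iota | apply/walknP].
have := nth_find 0 hh; rewrite nth_iota; last by have := hh; rewrite has_find size_iota.
by rewrite add0n => /walknP.
Qed.

Lemma W0 x y : W 0 x y <-> x = y.
Proof.
split=> [[p [hs hp hl]] | ->]; last by exists [::].
by case: p hs hp hl => [|//] _ _ <-.
Qed.

Lemma WS n x y : W n.+1 x y <-> exists2 z, e x z & W n z y.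
Proof.
split=> [[[|z p] [//= [hs] /andP[hz hp] hl]] | [z hz [p [hs hp hl]]]].
  by exists z => //; exists p.
by exists (z :: p); rewrite /= hs hz hp.
Qed.

Lemma W_cat m n x y z : W m x y -> W n y z -> W (m + n) x z.
Proof.
elim: m x => [|m IH] x; first by move/W0 => ->.
by case/WS=> w hw hW hn; apply/WS; exists w => //; apply: IH hn.
Qed.

Lemma WSr n x y : W n.+1 x y <-> exists2 z, W n x z & e z y.
Proof.
split.
  elim: n x => [|n IH] x; case/WS=> z hz.
    by move/W0=> <-; exists x => //; apply/W0.
  by case/IH=> w hw hwy; exists w => //; apply/WS; exists z.
case=> z hz hzy; rewrite -addn1; apply: W_cat hz _.
by apply/WS; exists y => //; apply/W0.
Qed.

Lemma W_sym n x y : W n x y -> W n y x.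
Proof.
elim: n x y => [|n IH] x y; first by move/W0 => ->; apply/W0.
case/WS=> z hz /IH hW; apply/WSr; exists z => //; by rewrite esym.
Qed.

Lemma dsym x y : d x y = d y x.
Proof.
by apply/eqP; rewrite eqn_leq; apply/andP; split; apply: dist_le; apply: W_sym; apply: dist_W.
Qed.

Lemma dxx x : d x x = 0.
Proof. by apply/eqP; rewrite -leqn0 dist_le //; apply/W0. Qed.

Lemma d0 x y : d x y = 0 -> x = y.
Proof. by move=> h; have := dist_W x y; rewrite h => /W0. Qed.

Lemma dtri x y z : d x z <= d x y + d y z.
Proof. by apply: dist_le; apply: W_cat (dist_W x y) (dist_W y z). Qed.

Lemma de1 x y : e x y -> d x y = 1.
Proof.
move=> h; apply/eqP; rewrite eqn_leq dist_le /=; last by apply/WS; exists y => //; apply/W0.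
rewrite lt0n; apply/eqP => /d0 hxy; by move: h; rewrite hxy eirr.
Qed.

Lemma d1e x y : d x y = 1 -> e x y.
Proof. by move=> h; have := dist_W x y; rewrite h => /WS [z hz /W0 <-]. Qed.

Lemma dstep n x y : d x y = n.+1 -> exists2 z, e x z & d z y = n.
Proof.
move=> h; have := dist_W x y; rewrite h => /WS [z hz hW].
exists z => //; apply/eqP; rewrite eqn_leq dist_le //=.
have := dtri x z y; rewrite h de1 //; lia'.
Qed.


Lemma dlip x y z : e x y -> d x z <= d y z + 1.
Proof. move=> h; have := dtri x y z; rewrite (de1 h); lia'. Qed.

Definition geod n (g : nat -> T) :=
  forall i j, i <= n -> j <= n -> d (g i) (g j) = (j - i) + (i - j).

Lemma geo x y : exists g, [/\ g 0 = x, g (d x y) = y & geod (d x y) g].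
Proof.
move: {2}(d x y) (erefl (d x y)) => n; elim: n x => [|n IH] x hn.
  by exists (fun _ => x); split => //; [apply: d0 | move=> i j; rewrite dxx; lia'].
case: (dstep hn) => z hz hzy; case: (IH z hzy) => g; rewrite hzy => -[g0 gn gg].
exists (fun i => if i is i'.+1 then g i' else x); rewrite hn; split => //.
have hxg : forall i, i <= n -> d x (g i) = i.+1.
  move=> i hi; apply/eqP; rewrite eqn_leq; apply/andP; split.
    have h1 := dlip (g i) hz; have h2 : d z (g i) = i by rewrite -g0 gg //; lia'.
    lia'.
  have h1 := dtri x (g i) y; have h2 : d (g i) y = n - i by rewrite -gn gg //; lia'.
  lia'.
move=> [|i] [|j] hi hj /=; first by rewrite dxx.
- by rewrite hxg //; lia'.
- by rewrite dsym hxg //; lia'.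
- by rewrite gg //; lia'.
Qed.

Lemma geo_e n g i : geod n g -> i < n -> e (g i) (g i.+1).
Proof. by move=> hg hi; apply: d1e; rewrite hg //; lia'. Qed.

Lemma inI u v w : (w \in interval e u v) = (d u w + d w v == d u v).
Proof. by rewrite inE. Qed.

Lemma I2 x y : (interval e x y = [set x; y]) <-> d x y <= 1.
Proof.
split=> [h | h].
  rewrite leqNgt; apply/negP => h2.
  case: (geo x y) => g [g0 gn gg].
  have e1 : d x (g 1) = 1 by rewrite -g0 gg //; lia'.
  have e2 : d (g 1) y = d x y - 1 by rewrite -{1}gn gg //; lia'.
  have : g 1 \in interval e x y by rewrite inI e1 e2; apply/eqP; lia'.
  rewrite h !inE => /orP [] /eqP h1.
    by move: e1; rewrite h1 dxx.
  by move: e2; rewrite h1 dxx; lia'.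
apply/setP => w; rewrite inI !inE.
case: (ltnP (d x y) 1) => h1.
  have hxy : x = y by apply: d0; lia'.
  subst y; rewrite dxx orbb; apply/idP/eqP => [/eqP h0 | ->]; last by rewrite dxx.
  by symmetry; apply: d0; lia'.
have h1' : d x y = 1 by lia'.
rewrite h1'; apply/idP/idP.
  case: (posnP (d x w)) => [/d0 -> | hp]; first by rewrite eqxx.
  move=> /eqP hs; have hw : d w y = 0 by lia'.
  by rewrite (d0 hw) eqxx orbT.
by case/orP => /eqP ->; rewrite dxx ?h1' // dsym h1'.
Qed.

Definition cycd L i j := minn ((j - i) + (i - j)) (L - ((j - i) + (i - j))).

Lemma iso_fun (f : nat -> T) L : 3 <= L ->
  (forall i j, i < L -> j < L -> d (f i) (f j) = cycd L i j) ->
  isometric_cycle e (mkseq f L).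
Proof.
move=> hL hf; split; rewrite ?size_mkseq //.
- apply/(uniqP (f 0)) => i j; rewrite !inE size_mkseq => hi hj.
  rewrite !nth_mkseq // => h; have := hf i j hi hj; rewrite h dxx /cycd; lia'.
- rewrite (cycle_path (f 0)); apply/(pathP (f 0)) => i; rewrite size_mkseq => hi.
  case: i hi => [|i] hi /=.
    rewrite -nth_last size_mkseq !nth_mkseq //; last by lia'.
    by apply: d1e; rewrite hf /cycd; lia'.
  by rewrite !nth_mkseq //; [apply: d1e; rewrite hf /cycd; lia' | lia'].
- by move=> x0 i j hi hj; rewrite !nth_mkseq //; apply: hf.
Qed.

Definition TCk k := forall u a b, e a b -> d u a = k -> d u b = k -> 0 < k ->
  exists w, [/\ e a w, e b w & d u w = k.-1].
Definition P2k k := forall u c a b, d u c = k.+1 -> e c a -> e c b ->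
  d u a = k -> d u b = k -> a != b -> e a b.

Lemma strongJ s : (forall k, k <= s -> TCk k) -> (forall k, k < s -> P2k k) ->
  forall p q u x y v, p + q <= s -> e x y -> d u x = p -> d u y = p.+1 ->
  d v y = q -> d v x = q.+1 -> d u v <= p + q ->
  exists w, [/\ e x w, e y w, d u w = p & d v w = q].
Proof.
move=> HT HP p; elim: p => [|p IH] q u x y v hs hxy hux huy hvy hvx huv.
  by move: huv; rewrite (d0 hux) dsym hvx; lia'.
have red : forall z, e u z -> d z x = p -> d z v <= p + q ->
    exists w, [/\ e x w, e y w, d u w = p.+1 & d v w = q].
  move=> z hz hzx hzv.
  case: (posnP p) => hp0.
    by move: hzv; rewrite hp0 in hzx; rewrite (d0 hzx) (dsym x v) hvx; lia'.
  have hzy : d z y = p.+1.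
    have := dlip y hz; have := dtri z x y; rewrite hzx (de1 hxy); lia'.
  case: (IH q z x y v) => //; first by lia'.
  move=> w [hxw hyw hzw hvw]; exists w; split => //.
  have := dlip w hz; have := dtri u w y; rewrite (dsym w y) (de1 hyw); lia'.
case: (dstep hux) => x1 hx1 hx1x.
case: (leqP (d x1 v) (p + q)) => hx1v; first by case: (red x1) => // w [? ? ? ?]; exists w.
have hx1v' : d x1 v = p + q + 1.
  have := dtri x1 x v; rewrite hx1x (dsym x v) hvx; lia'.
have huv2 : p + q <= d u v.
  have := @dlip x1 u v; rewrite esym => /(_ hx1).
  lia'.
have [x2 [hx12 hux2 hx2v hx2x]] : exists x2, [/\ e x1 x2, d u x2 = 2, d x2 v = p + q &
     (p = 0 /\ x2 = y) \/ (0 < p /\ d x2 x = p.-1)].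
  case: (posnP p) => hp0.
    rewrite hp0 in hx1x; have hx1e := d0 hx1x; subst x1.
    exists y; split => //; [by rewrite huy hp0 | by rewrite (dsym y v) hvy hp0 | by left].
  have : d x1 x = (p.-1).+1 by lia'.
  case/dstep => x2 hx12 hx2x; exists x2; split => //; last by right.
  - apply/eqP; rewrite eqn_leq; apply/andP; split.
      by have := dtri u x1 x2; rewrite (de1 hx1) (de1 hx12).
    by have := dtri u x2 x; rewrite hux hx2x; lia'.
  - apply/eqP; rewrite eqn_leq; apply/andP; split.
      by have := dtri x2 x v; rewrite hx2x (dsym x v) hvx; lia'.
    by have := dlip v hx12; lia'.
have hne : u != x2 by apply/eqP => hh; move: hux2; rewrite hh dxx.
have hnadj : ~~ e u x2 by apply/negP => /de1; rewrite hux2.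
case: (ltnP (p + q) (d u v)) => huv3; last first.
  have huvq : d u v = p + q by lia'.
  have hlt : p + q < s by lia'.
  have h1 : d v x1 = (p + q).+1 by rewrite dsym hx1v' addn1.
  have h2 : e x1 u by rewrite esym.
  have h3 : d v u = p + q by rewrite dsym.
  have h4 : d v x2 = p + q by rewrite dsym.
  have := HP _ hlt v x1 u x2 h1 h2 hx12 h3 h4 hne.
  by rewrite (negbTE hnadj).
have huvq : d u v = p + q + 1 by lia'.
have hle : p + q + 1 <= s by lia'.
have hvu : d v u = p + q + 1 by rewrite dsym huvq.
have hvx1 : d v x1 = p + q + 1 by rewrite dsym hx1v'.
have hpos : 0 < p + q + 1 by rewrite addn1.
case: (HT _ hle v u x1 hx1 hvu hvx1 hpos).
move=> z [huz hx1z hvz]; rewrite addn1 /= in hvz.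
have hzx2 : e z x2.
  case: (eqVneq z x2) => [hz | hz]; first by move: hnadj; rewrite -hz huz.
  have hlt : p + q < s by lia'.
  have h1 : d v x1 = (p + q).+1 by rewrite dsym hx1v' addn1.
  have h4 : d v x2 = p + q by rewrite dsym.
  exact: (HP _ hlt v x1 z x2 h1 hx1z hx12 hvz h4 hz).
case: hx2x => [[hp0 hx2y] | [hp0 hx2x]].
  subst x2; rewrite hp0 in hx1x; have hx1e := d0 hx1x; subst x1.
  exists z; split => //; [by rewrite esym | by rewrite de1 // hp0 | by rewrite hvz hp0].
case: (red z) => //.
- apply/eqP; rewrite eqn_leq; apply/andP; split.
    by have := dtri z x2 x; rewrite (de1 hzx2) hx2x; lia'.
  by have := dlip x huz; lia'.
- by rewrite dsym hvz.
by move=> w [? ? ? ?]; exists w.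
Qed.

Lemma notin4 (w a b c x : T) : w \notin [set a; b; c; x] ->
  [/\ w != a, w != b, w != c & w != x].
Proof. by move=> h; split; apply: contraNneq h => ->; rewrite !inE eqxx ?orbT. Qed.

Section FromAxioms.
Hypotheses (HJ : cond_J0' (interval e)) (HB : cond_br (interval e)).

Lemma EC x y u v z : d x y <= 1 -> d x u <= 1 -> d v y <= 1 ->
  d u z + d z v = d u v -> d x z <= 1 \/ d y z <= 1.
Proof.
move=> h1 h2 h3 h4; have := @HB u v x y z (proj2 (I2 x y) h1) (proj2 (I2 x u) h2) (proj2 (I2 v y) h3).
rewrite inI h4 eqxx => /(_ isT) [] /I2; tauto.
Qed.

Lemma NC w u v z : d w u <= 1 -> d w v <= 1 -> d u z + d z v = d u v -> d w z <= 1.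
Proof.
move=> h1 h2 h3; have h2' : d v w <= 1 by rewrite dsym.
have h0 : d w w <= 1 by rewrite dxx.
by case: (EC h0 h1 h2' h3).
Qed.

Lemma J0c u x y v : uniq [:: u; x; y; v] -> d u x + d x y = d u y ->
  d x y + d y v = d x v -> d u x + d x v != d u v ->
  exists w, [/\ d u w + d w y = d u y, d x w + d w v = d x v & w \notin [set u; x; y; v]].
Proof.
move=> hu h1 h2 h3.
have : ~~ (interval e u y :&: interval e x v \subset [set u; x; y; v]).
  apply/negP => hs; have := HJ hu; rewrite !inI h1 h2 !eqxx => /(_ isT isT hs).
  by rewrite (negbTE h3).
case/subsetPn => w; rewrite inE !inI => /andP [/eqP ? /eqP ?] hw; by exists w.
Qed.

Lemma TC1 : TCk 1.
Proof.
move=> u a b hab hua hub _; exists u; split; rewrite ?dxx //.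
- by rewrite esym; apply: d1e.
- by rewrite esym; apply: d1e.
Qed.

Lemma P20 : P2k 0.
Proof.
move=> u c a b _ _ _ /d0 ha /d0 hb; by rewrite -ha -hb eqxx.
Qed.

Lemma P2_step k : 0 < k -> TCk k -> P2k k.-1 -> P2k k.
Proof.
move=> hk HT HP u c a b huc hca hcb hua hub hab.
case: (boolP (e a b)) => // hnab; exfalso.
have hdab : d a b = 2.
  have := dtri a c b; rewrite (dsym a c) (de1 hca) (de1 hcb).
  have : d a b != 0 by apply/eqP => /d0 hh; move: hab; rewrite hh eqxx.
  have : d a b != 1 by apply/eqP => /d1e; rewrite (negbTE hnab).
  lia'.
have hac : a != c by apply/eqP => hh; move: hca; rewrite hh eirr.
have hau : a != u by apply/eqP => hh; move: hua; rewrite hh dxx; lia'.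
have hcu : c != u by apply/eqP => hh; move: huc; rewrite hh dxx.
have hbc : c != b by apply/eqP => hh; move: hcb; rewrite hh eirr.
have hbu : b != u by apply/eqP => hh; move: hub; rewrite hh dxx; lia'.
have huq : uniq [:: a; c; b; u].
  by rewrite /= !inE negb_or !negb_or hac hab hau hbc hcu hbu.
have e1 : d a c = 1 by rewrite dsym de1.
have e2 : d c b = 1 by rewrite de1.
case: (@J0c a c b u huq); first by rewrite e1 e2 hdab.
- by rewrite e2 (dsym c u) huc (dsym b u) hub; lia'.
- by rewrite e1 (dsym c u) huc (dsym a u) hua; lia'.
move=> w [hw1 hw2] /notin4 [hwa hwc hwb hwu].
have hdaw : d a w = 1.
  have : d a w != 0 by apply/eqP => /d0 hh; move: hwa; rewrite hh eqxx.
  have : d w b != 0 by apply/eqP => /d0 hh; move: hwb; rewrite hh eqxx.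
  lia'.
have hdwb : d w b = 1 by lia'.
have hcw : d c w = 1.
  have : d c w <= 1 by apply: (@NC c a b w); rewrite ?(de1 hca) ?(de1 hcb).
  have : d c w != 0 by apply/eqP => /d0 hh; move: hwc; rewrite hh eqxx.
  lia'.
have huw : d u w = k by rewrite dsym; move: hw2; rewrite hcw (dsym c u) huc; lia'.
case: (HT u a w) => //; first by apply: d1e.
move=> a' [haa' hwa' hua'].
case: (HT u w b) => //; first by apply: d1e.
move=> b' [hwb' hbb' hub'].
have hlev : forall z, d u z = k.-1 -> d z c <= 1 -> False.
  move=> z hz hzc; have := dtri u z c; rewrite hz huc; lia'.
case: (eqVneq a' b') => [hh | hne].
  subst b'; apply: (hlev a' hua'); apply: (@NC a' a b c).
  - by rewrite dsym de1.
  - by rewrite dsym de1.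
  by rewrite e1 e2 hdab.
have hab' : e a' b'.
  apply: (HP u w) => //; first by rewrite huw prednK.
case: (@EC a' b' a b c).
- by rewrite de1.
- by rewrite dsym de1.
- by rewrite de1.
- by rewrite e1 e2 hdab.
- by apply: hlev.
- by apply: hlev.
Qed.

Lemma TC_step k : 0 < k -> TCk k -> P2k k -> TCk k.+1.
Proof.
move=> hk HT HP u a b hab hua hub _.
case: (boolP [exists w, [&& e a w, e b w & d u w == k]]).
  by case/existsP => w /and3P [h1 h2 /eqP h3]; exists w.
move/existsPn => hn; exfalso.
have hn' : forall w, e a w -> e b w -> d u w = k -> False.
  by move=> w h1 h2 h3; have := hn w; rewrite h1 h2 h3 eqxx.
have : d a u = k.+1 by rewrite dsym.
case/dstep => a' haa' ha'u.
case: (dstep hub) => b1 hub1 hb1b.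
have hna'b : ~~ e a' b.
  by apply/negP => h; apply: (hn' a') => //; [rewrite esym | rewrite dsym].
have ha'b : d a' b = 2.
  have := dtri a' a b; rewrite (dsym a' a) (de1 haa') (de1 hab).
  have := dtri u a' b; rewrite hub (dsym u a') ha'u.
  have : d a' b != 1 by apply/eqP => /d1e; rewrite (negbTE hna'b).
  lia'.
have hab1 : k <= d a b1.
  have := dlip a hub1; rewrite hua (dsym b1 a); lia'.
have hab1' : d a b1 <= k.+1.
  have := dtri a b b1; rewrite (de1 hab) (dsym b b1) hb1b; lia'.
case: (ltnP k (d a b1)) => hk1; last first.
  have hb1a : d b1 a = k by rewrite dsym; lia'.
  case: (HT b1 a b) => // w [haw hbw hb1w].
  apply: (hn' w) => //; apply/eqP; rewrite eqn_leq; apply/andP; split.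
    have := dtri u b1 w; rewrite (de1 hub1) hb1w; lia'.
  have := dlip u haw; rewrite (dsym a u) (dsym w u) hua; lia'.
have hab1e : d a b1 = k.+1 by lia'.
have hb1u : d b1 u = 1 by rewrite dsym de1.
have ha'b1 : d a' b1 <= k.+1.
  have := dtri a' u b1; rewrite ha'u (dsym u b1) hb1u; lia'.
have hne1 : a' != a by apply/eqP => hh; move: haa'; rewrite hh eirr.
have hne2 : a' != b by apply/eqP => hh; move: ha'b; rewrite hh dxx.
have hne3 : a' != b1 by apply/eqP => hh; move: hab1e; rewrite -hh (de1 haa'); lia'.
have hne4 : a != b by apply/eqP => hh; move: hab; rewrite hh eirr.
have hne5 : a != b1 by apply/eqP => hh; move: hab1e; rewrite hh dxx.
have hne6 : b != b1 by apply/eqP => hh; move: hb1b; rewrite hh dxx; lia'.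
have huq : uniq [:: a'; a; b; b1].
  by rewrite /= !inE !negb_or hne1 hne2 hne3 hne4 hne5 hne6.
case: (@J0c a' a b b1 huq).
- by rewrite dsym (de1 haa') (de1 hab) ha'b.
- by rewrite (de1 hab) (dsym b b1) hb1b hab1e.
- by rewrite dsym (de1 haa') hab1e; lia'.
move=> w [hw1 hw2] /notin4 [hwa' hwa hwb hwnb1].
have hdaw : d a' w = 1.
  have : d a' w != 0 by apply/eqP => /d0 hh; move: hwa'; rewrite hh eqxx.
  have : d w b != 0 by apply/eqP => /d0 hh; move: hwb; rewrite hh eqxx.
  lia'.
have hdwb : d w b = 1 by lia'.
have haw : d a w = 1.
  have : d a w <= 1 by apply: (@NC a a' b w); rewrite ?(de1 haa') ?(de1 hab).
  have : d a w != 0 by apply/eqP => /d0 hh; move: hwa; rewrite hh eqxx.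
  lia'.
have hwb1 : d w b1 = k by move: hw2; rewrite haw hab1e; lia'.
have huw1 : k <= d u w.
  have := dlip u (d1e haw); rewrite (dsym a u) (dsym w u) hua; lia'.
have huw2 : d u w <= k.+1.
  have := dtri u b1 w; rewrite (de1 hub1) (dsym b1 w) hwb1; lia'.
case: (ltnP k (d u w)) => hkw; last first.
  apply: (hn' w); [exact: d1e | by rewrite esym; apply: d1e | lia'].
have huw : d u w = k.+1 by lia'.
case: (HT b1 w b) => //; first by apply: d1e.
- by rewrite dsym.
move=> t [hwt hbt hb1t].
have hut : d u t = k.
  apply/eqP; rewrite eqn_leq; apply/andP; split.
    have := dtri u b1 t; rewrite (de1 hub1) hb1t; lia'.
  have := dlip u hbt; rewrite (dsym b u) (dsym t u) hub; lia'.
case: (eqVneq a' t) => [hh | hne].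
  by subst t; move: hna'b; rewrite esym hbt.
have ha't : e a' t.
  apply: (HP u w) => //.
  - by apply: d1e; rewrite dsym.
  - by rewrite dsym.
have hat : d a t <= 1.
  apply: (@NC a a' b t); rewrite ?(de1 haa') ?(de1 hab) //.
  by rewrite (de1 ha't) (dsym t b) (de1 hbt) ha'b.
apply: (hn' t) => //.
have : d a t != 0 by apply/eqP => /d0 hh; move: hut; rewrite -hh hua; lia'.
by move=> h0; apply: d1e; lia'.
Qed.

Lemma TCP2_all k : TCk k /\ P2k k.
Proof.
elim: k => [|k [HT HP]].
  by split; [move=> u a b _ _ _; rewrite ltnn | exact: P20].
have HT' : TCk k.+1.
  case: (posnP k) => hk; first by rewrite hk; exact: TC1.
  exact: TC_step.
by split => //; apply: P2_step.
Qed.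

Lemma bridged_of_axioms : bridged e.
Proof.
move=> s [hs hu hc hd]; rewrite leqNgt; apply/negP => h4.
case Es: s hs => [|x0 s'] hs; first by [].
rewrite -Es in h4 hs.
have D : forall i j, i < size s -> j < size s ->
   d (nth x0 s i) (nth x0 s j) = cycd (size s) i j by move=> i j; apply: hd.
move: (size s) D h4 => L D h4.
have hL := odd_double_half L.
have TP := TCP2_all.
have E1 : forall i j, i < L -> j < L -> cycd L i j = 1 -> e (nth x0 s i) (nth x0 s j).
  by move=> i j hi hj h; apply: d1e; rewrite D.
case: (boolP (odd L)) => hodd; last first.
  set m := L./2.
  have hm : L = m + m by move: hL; rewrite (negbTE hodd) -addnn; lia'.
  have hne : nth x0 s m.-1 != nth x0 s m.+1.
    apply/eqP => hh; have := D m.-1 m.+1; rewrite hh dxx /cycd; lia'.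
  have : e (nth x0 s m.-1) (nth x0 s m.+1).
    apply: ((TP m.-1).2 (nth x0 s 0) (nth x0 s m)) => //;
      (try by rewrite D /cycd; lia'); (try by apply: E1; rewrite /cycd; lia').
  by move/de1; rewrite D /cycd; lia'.
set m := L./2.
have hm : L = (m + m).+1 by move: hL; rewrite hodd -addnn; lia'.
case: (eqVneq m 2) => hm2.
  have := @EC (nth x0 s 0) (nth x0 s 1) (nth x0 s 4) (nth x0 s 2) (nth x0 s 3).
  case; rewrite ?D /cycd; lia'.
case: ((TP m).1 (nth x0 s 0) (nth x0 s m) (nth x0 s m.+1));
  (try by rewrite D /cycd; lia'); (try by apply: E1; rewrite /cycd; lia'); try lia'.
move=> w [hw1 hw2 hw3].
have hP := (TP m.-1).2 (nth x0 s 0).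
have hmw : e (nth x0 s m.-1) w.
  case: (eqVneq (nth x0 s m.-1) w) => [hh | hne].
    by move: hw2; rewrite -hh => /de1; rewrite D /cycd; lia'.
  apply: (hP (nth x0 s m)) => //;
    (try by rewrite D /cycd; lia'); (try by apply: E1; rewrite /cycd; lia').
have hmw2 : e (nth x0 s m.+2) w.
  case: (eqVneq (nth x0 s m.+2) w) => [hh | hne].
    by move: hw1; rewrite -hh => /de1; rewrite D /cycd; lia'.
  apply: (hP (nth x0 s m.+1)) => //;
    (try by rewrite D /cycd; lia'); (try by apply: E1; rewrite /cycd; lia').
have := dtri (nth x0 s m.-1) w (nth x0 s m.+2).
rewrite (de1 hmw) (dsym w) (de1 hmw2) D /cycd; lia'.
Qed.
End FromAxioms.

Section Bridged.
Hypothesis hb : bridged e.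

Lemma no_iso (f : nat -> T) L : 4 <= L ->
  (forall i j, i < L -> j < L -> d (f i) (f j) = cycd L i j) -> False.
Proof.
move=> hL hf; have := hb (iso_fun (ltnW hL) hf); rewrite size_mkseq; lia'.
Qed.

Lemma noC4 a b c x : e a b -> e b c -> e c x -> e x a -> d a c = 2 -> d b x = 2 -> False.
Proof.
move=> h1 h2 h3 h4 h5 h6.
have := @no_iso (fun i => nth a [:: a; b; c; x] i) 4 (leqnn 4).
apply=> i j hi hj.
have := (de1 h1, de1 h2, de1 h3, de1 h4, dsym a b, dsym b c, dsym c x, dsym x a, dsym a c, dsym b x).
have := (dxx a, dxx b, dxx c, dxx x).
case=> [[[? ?] ?] ?] [[[[[[[[[? ?] ?] ?] ?] ?] ?] ?] ?] ?].
rewrite /cycd.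
by case: i hi => [|[|[|[|i]]]] hi //=; case: j hj => [|[|[|[|j]]]] hj //=; lia'.
Qed.

Lemma noC5 a b c x y : e a b -> e b c -> e c x -> e x y -> e y a ->
  d a c = 2 -> d a x = 2 -> d b x = 2 -> d b y = 2 -> d c y = 2 -> False.
Proof.
move=> h1 h2 h3 h4 h5 h6 h7 h8 h9 h10.
have := @no_iso (fun i => nth a [:: a; b; c; x; y] i) 5 isT.
apply=> i j hi hj.
have := (de1 h1, de1 h2, de1 h3, de1 h4, de1 h5, dsym a b, dsym b c, dsym c x, dsym x y, dsym y a).
have := (dsym a c, dsym a x, dsym b x, dsym b y, dsym c y).
have := (dxx a, dxx b, dxx c, dxx x, dxx y).
case=> [[[[? ?] ?] ?] ?] [[[[? ?] ?] ?] ?] [[[[[[[[[? ?] ?] ?] ?] ?] ?] ?] ?] ?].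
rewrite /cycd.
by case: i hi => [|[|[|[|[|i]]]]] hi //=; case: j hj => [|[|[|[|[|j]]]]] hj //=; lia'.
Qed.

Lemma cyc_check L (f : nat -> T) :
  (forall i j, i <= j -> j < L -> d (f i) (f j) = cycd L i j) ->
  forall i j, i < L -> j < L -> d (f i) (f j) = cycd L i j.
Proof.
move=> h i j hi hj; case: (leqP i j) => hij; first exact: h.
rewrite dsym h //; last exact: ltnW; rewrite /cycd; lia'.
Qed.

Lemma geo_u u a k : d u a = k -> exists A : nat -> T,
  [/\ A 0 = u, A k = a, geod k A, forall i, i <= k -> d u (A i) = i &
      forall i, i <= k -> d (A i) a = k - i].
Proof.
case: (geo u a) => A [A0 Ak gA] hk; rewrite hk in Ak gA.
exists A; split => // i hi.
  by rewrite -{1}A0 gA //; lia'.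
by rewrite -{1}Ak gA //; lia'.
Qed.

Lemma TCb_step k : (forall k', k' < k -> TCk k') -> (forall k', k' < k -> P2k k') -> TCk k.
Proof.
move=> IHT IHP u a b hab hua hub hk.
case: (posnP k.-1) => hk1.
  exists u; split; [rewrite esym; apply: d1e; lia' | rewrite esym; apply: d1e; lia' | by rewrite dxx].
case: (boolP [exists w, [&& e a w, e b w & d u w == k.-1]]).
  by case/existsP => w /and3P [h1 h2 /eqP h3]; exists w.
move/existsPn => hn; exfalso.
have hn' : forall w, e a w -> e b w -> d u w = k.-1 -> False.
  by move=> w h1 h2 h3; have := hn w; rewrite h1 h2 h3 eqxx.
have T1 : forall a b (B : nat -> T), e a b -> d u a = k -> d u b = k ->
   (forall w, e a w -> e b w -> d u w = k.-1 -> False) ->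
   B k = b -> (forall j, j <= k -> d u (B j) = j) -> (forall j, j <= k -> d (B j) b = k - j) ->
   forall j, 0 < j -> j <= k -> d a (B j) = k - j + 1.
  move=> a0 b0 B hab0 hua0 hub0 hn0 Bk Bu Bb j hj0 hjk.
  case: (eqVneq j k) => [-> | hjk'].
    by rewrite Bk (de1 hab0); lia'.
  have lb : k - j <= d a0 (B j).
    by have := dtri u (B j) a0; rewrite hua0 Bu // (dsym (B j) a0); lia'.
  have ub : d a0 (B j) <= k - j + 1.
    by have := dtri a0 b0 (B j); rewrite (de1 hab0) (dsym b0 (B j)) Bb //; lia'.
  case: (ltnP (k - j) (d a0 (B j))) => h; first by lia'.
  have hj : d (B j) a0 = k - j by rewrite dsym; lia'.
  case: (IHT (k - j) _ (B j) a0 b0) => //; [lia' | by rewrite Bb | lia' |].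
  move=> w [haw hbw hBw]; exfalso; apply: (hn0 w) => //.
  apply/eqP; rewrite eqn_leq; apply/andP; split.
    by have := dtri u (B j) w; rewrite Bu // hBw; lia'.
  by have := dlip u haw; rewrite (dsym a0 u) (dsym w u) hua0; lia'.
case: (geo_u hua) => A [A0 Ak gA Au Aa].
case: (geo_u hub) => B [B0 Bk gB Bu Bb].
have T1a := T1 a b B hab hua hub hn' Bk Bu Bb.
have hba : e b a by rewrite esym.
have T1b := T1 b a A hba hub hua (fun w h1 h2 h3 => hn' w h2 h1 h3) Ak Au Aa.
have hk2 : 2 <= k by lia'.
have T2 : forall i j, 0 < i -> i <= k -> 0 < j -> j <= k -> k < i + j ->
    d (A i) (B j) = k.*2.+1 - i - j.
  move=> i j hi0 hik hj0 hjk hij.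
  case: (eqVneq i k) => [hi | hi].
    by subst i; rewrite Ak T1a //; lia'.
  case: (eqVneq j k) => [hj | hj].
    by subst j; rewrite Bk dsym T1b //; lia'.
  have ub : d (A i) (B j) <= (k - i) + 1 + (k - j).
    have := dtri (A i) a (B j); have := dtri a b (B j).
    by rewrite Aa // (de1 hab) (dsym b (B j)) Bb //; lia'.
  case: (ltnP (d (A i) (B j)) ((k - i) + 1 + (k - j))) => h; last by lia'.
  exfalso.
  case: (@strongJ ((k - i) + (k - j)) _ _ (k - i) (k - j) (A i) a b (B j)) => //.
  - by move=> k' hk'; apply: IHT; lia'.
  - by move=> k' hk'; apply: IHP; lia'.
  - by rewrite Aa.
  - by rewrite dsym T1b //; lia'.
  - by rewrite Bb.
  - by rewrite dsym T1a //; lia'.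
  - by lia'.
  move=> w [haw hbw hAw hBw].
  have huw1 : d u w <= k by have := dtri u (A i) w; rewrite Au // hAw; lia'.
  have huw2 : k.-1 <= d u w.
    by have := dlip u haw; rewrite (dsym a u) (dsym w u) hua; lia'.
  have huw : d u w = k.
    case: (eqVneq (d u w) k.-1) => h'; first by exfalso; apply: (hn' w).
    lia'.
  have [t [hat hwt hAt]] : exists t, [/\ e a t, e w t & d (A i) t = (k - i).-1].
    by apply: (IHT (k - i)) => //; [lia' | rewrite Aa | lia'].
  have hut : d u t = k.-1.
    apply/eqP; rewrite eqn_leq; apply/andP; split.
      by have := dtri u (A i) t; rewrite Au // hAt; lia'.
    by have := dlip u hat; rewrite (dsym a u) (dsym t u) hua; lia'.
  have [s0 [hbs hws hBs]] : exists s0, [/\ e b s0, e w s0 & d (B j) s0 = (k - j).-1].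
    by apply: (IHT (k - j)) => //; [lia' | rewrite Bb | lia'].
  have hus : d u s0 = k.-1.
    apply/eqP; rewrite eqn_leq; apply/andP; split.
      by have := dtri u (B j) s0; rewrite Bu // hBs; lia'.
    by have := dlip u hbs; rewrite (dsym b u) (dsym s0 u) hub; lia'.
  case: (eqVneq t s0) => [hts | hts].
    by subst s0; apply: (hn' t).
  have hts' : e t s0.
    apply: (IHP k.-1) hwt hws hut hus hts; [lia' | by rewrite huw; lia'].
  apply: (@noC4 a b s0 t) => //; first by rewrite esym.
  - by rewrite esym.
  - apply/eqP; rewrite eqn_leq; apply/andP; split.
      by have := dtri a b s0; rewrite (de1 hab) (de1 hbs).
    rewrite ltnNge leq_eqVlt ltnS leqn0; apply/negP => /orP [] /eqP h0.
      by apply: (hn' s0) => //; apply: d1e.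
    by move: hus; rewrite -(d0 h0) hua; lia'.
  - apply/eqP; rewrite eqn_leq; apply/andP; split.
      by have := dtri b a t; rewrite (dsym b a) (de1 hab) (de1 hat).
    rewrite ltnNge leq_eqVlt ltnS leqn0; apply/negP => /orP [] /eqP h0.
      by apply: (hn' t) => //; apply: d1e.
    by move: hut; rewrite -(d0 h0) hub; lia'.
have T3 : forall i j, 0 < i -> 0 < j -> i + j = k -> d (A i) (B j) = k.
  move=> i j hi hj hij.
  have h1 : d (A i.+1) (B j) = k by rewrite T2 //; lia'.
  have lb : k.-1 <= d (A i) (B j).
    have := dtri (A i.+1) (A i) (B j); rewrite gA //; lia'.
  have ub : d (A i) (B j) <= k.
    by have := dtri (A i) u (B j); rewrite (dsym (A i) u) Au ?Bu; lia'.
  case: (eqVneq (d (A i) (B j)) k) => // hne; exfalso.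
  have hk' : d (B j) (A i) = k.-1 by rewrite dsym; lia'.
  have [N [eN dBN dAN]] : exists N, [/\ e (A i.+1) N, d (B j) N = k.-1 & d (A i) N = 2].
    case: (eqVneq i.+1 k) => hik.
      exists b; split; first by rewrite hik Ak.
        by rewrite Bb //; lia'.
      by rewrite dsym T1b //; lia'.
    exists (A i.+2); split.
    - by apply: (geo_e gA); lia'.
    - by rewrite dsym T2 //; lia'.
    - by rewrite gA //; lia'.
  have hne2 : A i != N by apply/eqP => hh; move: dAN; rewrite hh dxx.
  have : e (A i) N.
    apply: (IHP k.-1 _ (B j) (A i.+1)) => //; first by lia'.
    - by rewrite dsym h1; lia'.
    - by apply: d1e; rewrite gA //; lia'.
  by move/de1; rewrite dAN.
have T4 : forall m i j, 0 < i -> 0 < j -> i + j + m = k -> d (A i) (B j) = i + j.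
  elim=> [|m IHm] i j hi hj hm; first by rewrite T3 //; lia'.
  have h1 : d (A i.+1) (B j) = i.+1 + j by apply: IHm; lia'.
  apply/eqP; rewrite eqn_leq; apply/andP; split.
    by have := dtri (A i) u (B j); rewrite (dsym (A i) u) Au ?Bu; lia'.
  have := dtri (A i.+1) (A i) (B j); rewrite gA //; lia'.
have Cr : forall i j, i <= k -> 0 < j -> j <= k ->
    d (A i) (B j) = minn (i + j) (k.*2.+1 - i - j).
  move=> i j hi hj0 hj.
  case: (posnP i) => hi0.
    by subst i; rewrite A0 Bu //; lia'.
  case: (leqP (i + j) k) => hij.
    by rewrite (T4 (k - i - j)) //; lia'.
  by rewrite T2 //; lia'.
apply: (@no_iso (fun n => if n <= k then A n else B (k.*2.+1 - n)) k.*2.+1); first by lia'.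
apply: cyc_check => n1 n2 h12 hn2 /=.
case: (leqP n2 k) => h2.
  by rewrite (leq_trans h12 h2) /cycd gA; lia'.
case: (leqP n1 k) => h1.
  by rewrite /cycd Cr; lia'.
by rewrite /cycd gB; lia'.
Qed.
Lemma P2b_step k : (forall k', k' <= k -> TCk k') -> (forall k', k' < k -> P2k k') -> P2k k.
Proof.
move=> IHT IHP u c a b huc hca hcb hua hub hab.
case: (posnP k) => hk0.
  by move: hab; rewrite hk0 in hua hub; rewrite -(d0 hua) -(d0 hub) eqxx.
case: (boolP (e a b)) => // hnab; exfalso.
have hlev : forall z, d u z = k.-1 -> 2 <= d c z.
  by move=> z hz; have := dtri u z c; rewrite hz huc (dsym z c); lia'.
have d2 : forall x y, 2 <= d x y -> d x y <= 2 -> d x y = 2 by move=> x y; lia'.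
have ne01 : forall x y, x != y -> ~~ e x y -> 2 <= d x y.
  move=> x y hxy hnxy; rewrite ltnNge leq_eqVlt ltnS leqn0; apply/negP => /orP [] /eqP h0.
    by move: hnxy; rewrite d1e.
  by move: hxy; rewrite (d0 h0) eqxx.
have Core : forall a0 b0 w, e c a0 -> e c b0 -> d u a0 = k -> d u b0 = k -> a0 != b0 ->
    ~~ e a0 b0 -> e a0 w -> e b0 w -> d u w = k -> False.
  move=> a0 b0 w hca0 hcb0 hua0 hub0 hab0 hnab0 haw hbw huw.
  have hdab : d a0 b0 = 2.
    apply: d2; first exact: ne01.
    by have := dtri a0 c b0; rewrite (dsym a0 c) (de1 hca0) (de1 hcb0).
  have [a' [haa' hwa' hua']] : exists a', [/\ e a0 a', e w a' & d u a' = k.-1].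
    by apply: (IHT k).
  have [b' [hwb' hbb' hub']] : exists b', [/\ e w b', e b0 b' & d u b' = k.-1].
    by apply: (IHT k) => //; rewrite esym.
  have hca' : d c a' = 2.
    apply: d2; first exact: hlev.
    by have := dtri c a0 a'; rewrite (de1 hca0) (de1 haa').
  have hcb' : d c b' = 2.
    apply: d2; first exact: hlev.
    by have := dtri c b0 b'; rewrite (de1 hcb0) (de1 hbb').
  have C4a : ~~ e b0 a'.
    apply/negP => h; apply: (@noC4 a0 c b0 a') => //; by rewrite esym.
  case: (eqVneq a' b') => [hh | hne].
    by subst b'; move: C4a; rewrite hbb'.
  have hab' : e a' b'.
    apply: (IHP k.-1 _ u w) => //; [lia' | by rewrite huw; lia'].
  have C4b : ~~ e a0 b'.
    apply/negP => h; apply: (@noC4 a0 c b0 b') => //; [by rewrite esym | by rewrite esym].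
  apply: (@noC5 a0 c b0 b' a') => //.
  - by rewrite esym.
  - by rewrite esym.
  - by rewrite esym.
  - apply: d2.
      apply: ne01 => //; apply/eqP => hh; move: hua0; rewrite hh hub'; lia'.
    by have := dtri a0 a' b'; rewrite (de1 haa') (de1 hab').
  - apply: d2.
      apply: ne01 => //; apply/eqP => hh; move: hub0; rewrite hh hua'; lia'.
    by have := dtri b0 b' a'; rewrite (de1 hbb') (dsym b' a') (de1 hab').
have P1 : forall a0 b0, e c a0 -> e c b0 -> d u a0 = k -> d u b0 = k -> a0 != b0 ->
    ~~ e a0 b0 -> forall x i, 0 < i -> i <= k -> d u x = i -> d x a0 = k - i ->
    d x b0 = k - i + 2.
  move=> a0 b0 hca0 hcb0 hua0 hub0 hab0 hnab0 x i hi0 hik hux hxa.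
  have hxc : d x c = k - i + 1.
    apply/eqP; rewrite eqn_leq; apply/andP; split.
      by have := dtri x a0 c; rewrite hxa (dsym a0 c) (de1 hca0).
    by have := dtri u x c; rewrite hux huc; lia'.
  have lb : k - i <= d x b0 by have := dtri u x b0; rewrite hux hub0; lia'.
  have ub : d x b0 <= k - i + 2 by have := dtri x c b0; rewrite hxc (de1 hcb0); lia'.
  case: (ltnP (k - i) (d x b0)) => h1; last first.
    have : e a0 b0.
      apply: (IHP (k - i) _ x c) => //; [lia' | by rewrite hxc addn1 | lia'].
    by rewrite (negbTE hnab0).
  case: (ltnP (k - i + 1) (d x b0)) => h2; first by lia'.
  exfalso.
  have [w [hcw hbw hxw]] : exists w, [/\ e c w, e b0 w & d x w = (k - i + 1).-1].
    apply: (IHT (k - i + 1)) => //; lia'.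
  rewrite addn1 /= in hxw.
  case: (eqVneq a0 w) => [hh | hne].
    by subst w; move: hnab0; rewrite esym hbw.
  have haw : e a0 w.
    by apply: (IHP (k - i) _ x c) => //; [lia' | rewrite hxc addn1].
  apply: (Core a0 b0 w) => //.
  apply/eqP; rewrite eqn_leq; apply/andP; split.
    by have := dtri u x w; rewrite hux hxw; lia'.
  by have := dlip u hcw; rewrite (dsym c u) huc (dsym w u); lia'.
case: (geo_u hua) => A [A0 Ak gA Au Aa].
case: (geo_u hub) => B [B0 Bk gB Bu Bb].
have hba : b != a by rewrite eq_sym.
have hnba : ~~ e b a by rewrite esym.
have P1a : forall i, 0 < i -> i <= k -> d (A i) b = k - i + 2.
  by move=> i hi0 hik; apply: (P1 a b) => //; [apply: Au | apply: Aa].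
have P1b : forall j, 0 < j -> j <= k -> d (B j) a = k - j + 2.
  by move=> j hj0 hjk; apply: (P1 b a) => //; [apply: Bu | apply: Bb].
have hAc : forall i, i <= k -> d (A i) c = k.+1 - i.
  move=> i hi; apply/eqP; rewrite eqn_leq; apply/andP; split.
    by have := dtri (A i) a c; rewrite Aa // (dsym a c) (de1 hca); lia'.
  by have := dtri u (A i) c; rewrite Au // huc; lia'.
have hBc : forall j, j <= k -> d (B j) c = k.+1 - j.
  move=> j hj; apply/eqP; rewrite eqn_leq; apply/andP; split.
    by have := dtri (B j) b c; rewrite Bb // (dsym b c) (de1 hcb); lia'.
  by have := dtri u (B j) c; rewrite Bu // huc; lia'.
have Near : forall i j, 0 < i -> i <= k -> 0 < j -> j <= k -> k < i + j ->
    d (A i) (B j) = k.*2.+2 - i - j.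
  move=> i j hi0 hik hj0 hjk hij.
  case: (eqVneq i k) => [hi | hi].
    by subst i; rewrite Ak dsym P1b //; lia'.
  case: (eqVneq j k) => [hj | hj].
    by subst j; rewrite Bk P1a //; lia'.
  have ub : d (A i) (B j) <= (k - i) + 2 + (k - j).
    have := dtri (A i) c (B j); rewrite hAc // (dsym c (B j)) hBc //; lia'.
  case: (ltnP (d (A i) (B j)) ((k - i) + 2 + (k - j))) => h; last by lia'.
  exfalso.
  case: (@strongJ ((k.+1 - i) + (k - j)) _ _ (k.+1 - i) (k - j) (A i) c b (B j)) => //.
  - by move=> k' hk'; apply: IHT; lia'.
  - by move=> k' hk'; apply: IHP; lia'.
  - by rewrite hAc.
  - by rewrite P1a //; lia'.
  - by rewrite Bb.
  - by rewrite hBc //; lia'.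
  - by lia'.
  move=> w [hcw hbw hAw hBw].
  have huw : d u w = k.
    apply/eqP; rewrite eqn_leq; apply/andP; split.
      by have := dtri u (B j) w; rewrite Bu // hBw; lia'.
    by have := dlip u hcw; rewrite (dsym c u) huc (dsym w u); lia'.
  case: (eqVneq a w) => [hh | hne].
    by subst w; move: hnab; rewrite esym hbw.
  case: (boolP (e a w)) => haw.
    exact: (Core a b w).
  have := P1 a w hca hcw hua huw hne haw (A i) i hi0 hik (Au _ hik) (Aa _ hik).
  rewrite hAw; lia'.
have Low : forall m i j, 0 < i -> 0 < j -> i + j + m = k -> d (A i) (B j) = i + j.
  elim=> [|m IHm] i j hi hj hm.
    have h1 : d (A i.+1) (B j) = k.+1 by rewrite Near //; lia'.
    apply/eqP; rewrite eqn_leq; apply/andP; split.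
      by have := dtri (A i) u (B j); rewrite (dsym (A i) u) Au ?Bu; lia'.
    have := dtri (A i.+1) (A i) (B j); rewrite gA //; lia'.
  have h1 : d (A i.+1) (B j) = i.+1 + j by apply: IHm; lia'.
  apply/eqP; rewrite eqn_leq; apply/andP; split.
    by have := dtri (A i) u (B j); rewrite (dsym (A i) u) Au ?Bu; lia'.
  have := dtri (A i.+1) (A i) (B j); rewrite gA //; lia'.
have Cr : forall i j, i <= k -> 0 < j -> j <= k ->
    d (A i) (B j) = minn (i + j) (k.*2.+2 - i - j).
  move=> i j hi hj0 hj.
  case: (posnP i) => hi0.
    by subst i; rewrite A0 Bu //; lia'.
  case: (leqP (i + j) k) => hij.
    by rewrite (Low (k - i - j)) //; lia'.
  by rewrite Near //; lia'.
apply: (@no_iso (fun n => if n <= k then A n else if n == k.+1 then c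
                          else B (k.*2.+2 - n)) k.*2.+2); first by lia'.
apply: cyc_check => n1 n2 h12 hn2 /=.
case: (leqP n2 k) => h2.
  by rewrite (leq_trans h12 h2) /cycd gA; lia'.
case: (leqP n1 k) => h1.
  case: (eqVneq n2 k.+1) => h3.
    by subst n2; rewrite /cycd hAc //; lia'.
  by rewrite /cycd Cr; lia'.
case: (eqVneq n1 k.+1) => h3.
  subst n1; case: (eqVneq n2 k.+1) => h4.
    by subst n2; rewrite dxx /cycd; lia'.
  by rewrite /cycd dsym hBc; lia'.
have h4 : n2 != k.+1 by apply/eqP => hh; subst n2; lia'.
by rewrite (negbTE h4) /cycd gB; lia'.
Qed.

Lemma TCP2b_all k : TCk k /\ P2k k.
Proof.
elim: k {-2}k (leqnn k) => [|n IH] k hk.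
  have hk0 : k = 0 by lia'.
  subst k; split; first by move=> u a b _ _ _; rewrite ltnn.
  by apply: P2b_step => k' hk'; [move=> u a b _ _ _; have -> : k' = 0 by lia'; rewrite ltnn | lia'].
have IHT : forall k', k' < k -> TCk k' by move=> k' hk'; apply: (IH k' _).1; lia'.
have IHP : forall k', k' < k -> P2k k' by move=> k' hk'; apply: (IH k' _).2; lia'.
have HT : TCk k by apply: TCb_step.
split => //; apply: P2b_step => // k' hk'.
case: (eqVneq k' k) => [-> // | hne]; apply: IHT; lia'.
Qed.

Lemma J0_b : cond_J0' (interval e).
Proof.
move=> u x y v hu; rewrite !inI => /eqP h1 /eqP h2 hs.
have hinS : forall w, d u w + d w y = d u y -> d x w + d w v = d x v ->
    w \in [set u; x; y; v].
  by move=> w h h'; apply: (subsetP hs); rewrite inE !inI h h' !eqxx.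
have [nux nxy nyv] : [/\ u != x, x != y & y != v].
  split; apply: contraTneq hu => ->; rewrite /= !inE !eqxx /=; by rewrite ?(orTb, orbT, andbF, andFb).
have in4 : forall w, w \in [set u; x; y; v] -> [\/ w = u, w = x, w = y | w = v].
  move=> w; rewrite !inE.
  case: eqP => [->|_] /=; first by constructor 1.
  case: eqP => [->|_] /=; first by constructor 2.
  case: eqP => [->|_] /=; first by constructor 3.
  by move/eqP ->; constructor 4.
have hxy1 : d x y = 1.
  case Exy : (d x y) => [|n].
    by move: nxy; rewrite (d0 Exy) eqxx.
  case: n Exy => [//|n] Exy.
  case: (dstep Exy) => z hxz hzy.
  have z1 : d u z + d z y = d u y.
    apply/eqP; rewrite eqn_leq dtri andbT.
    by have := dtri u x z; rewrite (de1 hxz); lia'.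
  have z2 : d x z + d z v = d x v.
    apply/eqP; rewrite eqn_leq dtri andbT.
    by have := dtri z y v; rewrite (de1 hxz); lia'.
  case: (in4 z (hinS z z1 z2)) => hz; subst z.
  - by move: z1; rewrite dxx; lia'.
  - by move: hxz; rewrite eirr.
  - by move: hzy; rewrite dxx.
  - by have := de1 hxz; lia'.
have exy : e x y by apply: d1e.
case: (ltnP (d u v) (d u x + d x v)) => huv; last first.
  by apply/eqP/eqP; rewrite eqn_leq dtri huv.
exfalso.
have TP := TCP2b_all.
case: (@strongJ (d u x + d v y) _ _ (d u x) (d v y) u x y v) => //.
- by move=> k _; apply: (TP k).1.
- by move=> k _; apply: (TP k).2.
- by rewrite -h1 hxy1 addn1.
- by rewrite dsym -h2 hxy1 add1n dsym.
- by rewrite -h2 hxy1 in huv; rewrite (dsym y v) in huv; lia'.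
move=> w [hxw hyw huw hvw].
have w1 : d u w + d w y = d u y by rewrite huw (dsym w y) (de1 hyw) -h1 hxy1.
have w2 : d x w + d w v = d x v by rewrite (de1 hxw) (dsym w v) hvw -h2 hxy1 (dsym y v) add1n.
case: (in4 w (hinS w w1 w2)) => hw; subst w.
- by move: nux; rewrite (d0 (etrans (Logic.eq_sym huw) (dxx u))) eqxx.
- by move: hxw; rewrite eirr.
- by move: hyw; rewrite eirr.
- by move: nyv; rewrite (d0 (etrans (Logic.eq_sym hvw) (dxx v))) eqxx.
Qed.

Lemma VC w u v z : d w u <= 1 -> d w v <= 1 -> d u z + d z v = d u v -> d w z <= 1.
Proof.
move=> h1 h2 h3.
case: (posnP (d u z)) => hu0; first by rewrite -(d0 hu0).
case: (posnP (d z v)) => hv0; first by rewrite (d0 hv0).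
have huv : d u v <= 2 by have := dtri u w v; rewrite (dsym u w); lia'.
have hwu : d w u = 1.
  case: (posnP (d w u)) => h0; last by lia'.
  by move/d0: h0 => hh; subst w; lia'.
have hwv : d w v = 1.
  case: (posnP (d w v)) => h0; last by lia'.
  by move/d0: h0 => hh; subst w; have := dsym u v; lia'.
case: (leqP (d w z) 1) => // hwz; exfalso.
have hwz2 : d w z = 2 by have := dtri w u z; lia'.
have huv2 : d u v = 2 by lia'.
have : e u v.
  apply: ((TCP2b_all 1).2 w z) => //.
  - by apply: d1e; rewrite dsym; lia'.
  - by apply: d1e; lia'.
  - by apply/eqP => hh; move: huv2; rewrite hh dxx.
by move/de1; lia'.
Qed.

Lemma br_b : cond_br (interval e).
Proof.
move=> u v x y z /I2 hxy /I2 hxu /I2 hvy; rewrite inI => /eqP hz.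
suff : d x z <= 1 \/ d y z <= 1 by case => h; [left | right]; apply/I2.
case: (leqP (d x v) 1) => hxv; first by left; apply: (VC hxu hxv hz).
case: (leqP (d y u) 1) => hyu; first by right; apply: (VC hyu _ hz); rewrite dsym.
have dxy : d x y = 1.
  case: (posnP (d x y)) => h0; last by lia'.
  by move/d0: h0 => hh; subst x; lia'.
have dxu : d x u = 1.
  case: (posnP (d x u)) => h0; last by lia'.
  by move/d0: h0 => hh; subst x; have := dsym y u; lia'.
have dvy : d v y = 1.
  case: (posnP (d v y)) => h0; last by lia'.
  by move/d0: h0 => hh; subst v; lia'.
have dxv : d x v = 2 by have := dtri x y v; rewrite (dsym y v); lia'.
have duy : d u y = 2 by have := dtri u x y; rewrite (dsym u x) (dsym y u) in hyu *; lia'.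
case: (posnP (d u z)) => hu0; first by left; rewrite -(d0 hu0).
case: (posnP (d z v)) => hv0; first by right; rewrite (d0 hv0) dsym.
have huv3 : d u v <= 3.
  by have := dtri u x v; rewrite (dsym u x); lia'.
case: (leqP (d u v) 2) => huv.
  have hz1 : d u z = 1 by lia'.
  have hz2 : d z v = 1 by lia'.
  case: (leqP (d x z) 1) => hxz; first by left.
  case: (leqP (d y z) 1) => hyz; first by right.
  exfalso; apply: (@noC5 u x y v z).
  - by apply: d1e; rewrite dsym.
  - exact: d1e.
  - by apply: d1e; rewrite dsym.
  - by apply: d1e; rewrite dsym.
  - by apply: d1e; rewrite dsym.
  - by [].
  - by lia'.
  - by [].
  - by have := dtri x u z; rewrite hz1; lia'.
  - by have := dtri y v z; rewrite (dsym y v) (dsym z v) in hz2 *; lia'.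
have huv' : d u v = 3 by lia'.
case: (leqP (d u z) 1) => hz1.
  have hzv : d v z = 2 by rewrite dsym; lia'.
  case: (eqVneq x z) => [<- | hne]; first by left; rewrite dxx.
  left; suff hxz : e x z by rewrite (de1 hxz).
  apply: ((TCP2b_all 2).2 v u) => //.
  - by rewrite dsym.
  - by apply: d1e; rewrite dsym.
  - by apply: d1e; lia'.
  - by rewrite dsym.
have hzv : d v z = 1 by rewrite dsym; lia'.
case: (eqVneq y z) => [<- | hne]; first by right; rewrite dxx.
right; suff hyz : e y z by rewrite (de1 hyz).
apply: ((TCP2b_all 2).2 u v) => //; try (by apply: d1e); try (by apply: d1e; rewrite dsym); lia'.
Qed.

End Bridged.
End Dist.


Theorem theorem7 (T : finType) (e : rel T) :
  symmetric e -> irreflexive e -> connected_graph e ->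
  (cond_J0' (interval e) /\ cond_br (interval e) <-> bridged e).
Proof.
move=> hs hi hc; split.
  by case=> HJ HB; apply: (bridged_of_axioms hs hi hc HJ HB).
by move=> hb; split; [apply: (J0_b hs hi hc hb) | apply: (br_b hs hi hc hb)].
Qed.
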